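(* Let $n\ge3$ and $\lambda\ge1$ be integers and let $A,X,Y,a,x,y,z,H,J$ be as below. Then $(x,y,z)$ is a flag-regular triple for $A$, and $\mathbf Q_n^{(\lambda)}\cong\mathrm{Cos}(A,H,J)\cong\mathrm{Cos}(X,\langle a\rangle,\langle z\rangle)\cong\mathrm{Cos}(Y,\langle a\rangle,\langle zx\rangle)$, a graph of valency $n$ and edge-multiplicity $\lambda$.
   Context: $A=N\rtimes(\langle a\rangle\rtimes\langle x\rangle)$, where $N=\langle v_0,\dots,v_{n-1}\rangle\cong\mathbb Z_2^n$ is elementary abelian with basis $v_0,\dots,v_{n-1}$, $|a|=n\lambda$, $|x|=2$, $a^x=a^{-1}$, $v_i^a=v_{i+1}$ and $v_i^x=v_{n-i}$ (indices mod $n$). Let $z=v_0$, $y=ax$, $H=\langle x,y\rangle=\langle a\rangle\rtimes\langle x\rangle\cong D_{2n\lambda}$, $J=\langle x,z\rangle\cong\mathbb Z_2^2$, $X=N\rtimes\langle a\rangle=\langle a,z\rangle$, and $Y=(\langle v_0v_1,\dots,v_{n-2}v_{n-1}\rangle\rtimes\langle a\rangle)\rtimes\langle zx\rangle=\langle a,zx\rangle$. A flag-regular triple for a group $G$ is $(x,y,z)$, pairwise distinct involutions with $G=\langle x,y,z\rangle$, $xz=zx$, $z\notin\langle x,y\rangle$, $|xy|,|yz|$ finite. $\mathrm{Cos}(G,H,J)$: vertices the right cosets of $H$, edges the right cosets of $J$, $Hu$ incident with $Jv$ iff $vu^{-1}\in JH$. $\mathbf Q_n$ is the $n$-dimensional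 hypercube (vertices $\mathbb Z_2^n$, adjacent iff differing in exactly one coordinate) and $\mathbf Q_n^{(\lambda)}$ is obtained by replacing each edge by $\lambda$ parallel edges. *)

(* Defs.v *)
From mathcomp Require Import all_boot all_fingroup all_solvable.
Set Implicit Arguments. Unset Strict Implicit. Unset Printing Implicit Defensive.

Local Open Scope group_scope.

Definition mgraph_iso (V1 E1 V2 E2 : finType)
    (vs1 : {set V1}) (es1 : {set E1}) (I1 : V1 -> E1 -> bool)
    (vs2 : {set V2}) (es2 : {set E2}) (I2 : V2 -> E2 -> bool) : Prop :=
  exists (f : V1 -> V2) (g : E1 -> E2),
    [/\ {in vs1 &, injective f}, f @: vs1 = vs2,
        {in es1 &, injective g}, g @: es1 = es2 &
        {in vs1, forall u, {in es1, forall e, I2 (f u) (g e) = I1 u e}}].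

Definition madj (V E : finType) (es : {set E}) (I : V -> E -> bool) (u w : V) :=
  (u != w) && [exists e in es, I u e && I w e].

Definition val_mult (V E : finType) (vs : {set V}) (es : {set E})
    (I : V -> E -> bool) (k m : nat) : Prop :=
  [/\ {in es, forall e, #|[set u in vs | I u e]| = 2},
      {in vs, forall u, #|[set w in vs | madj es I u w]| = k} &
      {in vs &, forall u w, madj es I u w ->
                 #|[set e in es | I u e && I w e]| = m}].

(* vertices: right cosets H u; edges: right cosets J v;
   H u incident with J v iff v u^-1 \in J H (u, v chosen representatives). *)
Definition cos_inc (gT : finGroupType) (H J : {set gT}) (B C : {set gT}) : bool :=
  repr C * (repr B)^-1 \in J * H.

Definition cos_iso (gT1 gT2 : finGroupType)
    (G1 H1 J1 : {set gT1}) (G2 H2 J2 : {set gT2}) : Prop :=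
  mgraph_iso (rcosets H1 G1) (rcosets J1 G1) (@cos_inc gT1 H1 J1)
             (rcosets H2 G2) (rcosets J2 G2) (@cos_inc gT2 H2 J2).

Notation cube_vert n := {ffun 'I_n -> bool}.

Definition cube_adj (n : nat) (u w : cube_vert n) : bool :=
  #|[set i | u i != w i]| == 1%N.

Definition cube_edges0 (n : nat) : {set {set cube_vert n}} :=
  [set e | [exists u : cube_vert n, exists w : cube_vert n,
              cube_adj u w && (e == [set u; w])]].

(* each edge of Q_n replaced by lam parallel copies *)
Definition cube_edges (n lam : nat) : {set {set cube_vert n} * 'I_lam} :=
  setX (cube_edges0 n) [set: 'I_lam].

Definition cube_inc (n lam : nat) (u : cube_vert n)
    (e : {set cube_vert n} * 'I_lam) : bool := u \in e.1.

Definition cube_cos_iso (n lam : nat) (gT : finGroupType) (G H J : {set gT}) : Prop :=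
  mgraph_iso [set: cube_vert n] (cube_edges n lam) (@cube_inc n lam)
             (rcosets H G) (rcosets J G) (@cos_inc gT H J).

Definition flag_regular (gT : finGroupType) (G : {set gT}) (x y z : gT) : Prop :=
  [/\ [/\ #[x] = 2, #[y] = 2 & #[z] = 2]%N,
      [/\ x != y, y != z & x != z],
      G = <<[set x; y; z]>>,
      commute x z &
      z \notin <<[set x; y]>>].
(* |xy|, |yz| finite: automatic in a finite group. *)

Definition Nsub (gT : finGroupType) (n : nat) (v : nat -> gT) : {set gT} :=
  <<[set v (val i) | i : 'I_n]>>.

(* Main.v *)
Require Import Defs.
From mathcomp Require Import all_boot all_fingroup all_solvable zify.
Set Implicit Arguments. Unset Strict Implicit. Unset Printing Implicit Defensive.
Local Open Scope group_scope.

Lemma inv_on (T1 T2 : finType) (f : T1 -> T2) (A : {set T1}) (B : {set T2}) (x0 : T1) :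
  {in A &, injective f} -> f @: A = B ->
  exists f' : T2 -> T1, (forall y, y \in B -> f' y \in A /\ f (f' y) = y) /\
                        (forall u, u \in A -> f' (f u) = u).
Proof.
move=> inj img.
exists (fun y => odflt x0 [pick u in A | f u == y]).
have H1 : forall y, y \in B -> odflt x0 [pick u in A | f u == y] \in A /\
                             f (odflt x0 [pick u in A | f u == y]) = y.
  move=> y; rewrite -img => /imsetP [u Au ->].
  case: pickP => [u' /andP [Au' /eqP fu'] | /(_ u)]; first by [].
  by rewrite Au eqxx.
split=> // u Au.
have fB : f u \in B by rewrite -img imset_f.
have [H2 H3] := H1 _ fB.
by apply: inj.
Qed.

Lemma mgraph_sym (V1 E1 V2 E2 : finType) (v0 : V1) (e0 : E1)
    (vs1 : {set V1}) (es1 : {set E1}) (I1 : V1 -> E1 -> bool)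
    (vs2 : {set V2}) (es2 : {set E2}) (I2 : V2 -> E2 -> bool) :
  mgraph_iso vs1 es1 I1 vs2 es2 I2 -> mgraph_iso vs2 es2 I2 vs1 es1 I1.
Proof.
case=> f [g [fi fim gi gim inc]].
have [f' [Hf1 Hf2]] := inv_on v0 fi fim.
have [g' [Hg1 Hg2]] := inv_on e0 gi gim.
exists f', g'; split.
- move=> y y' yB y'B e; have [_ <-] := Hf1 _ yB; have [_ <-] := Hf1 _ y'B; by rewrite e.
- apply/setP => u; apply/imsetP/idP => [[y yB ->] | uA]; first by case: (Hf1 _ yB).
  by exists (f u); [rewrite -fim imset_f | rewrite Hf2].
- move=> y y' yB y'B e; have [_ <-] := Hg1 _ yB; have [_ <-] := Hg1 _ y'B; by rewrite e.
- apply/setP => u; apply/imsetP/idP => [[y yB ->] | uA]; first by case: (Hg1 _ yB).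
  by exists (g u); [rewrite -gim imset_f | rewrite Hg2].
- move=> y yB e eB; have [A1 A2] := Hf1 _ yB; have [B1 B2] := Hg1 _ eB.
  by rewrite -inc // A2 B2.
Qed.

Lemma mgraph_trans (V1 E1 V2 E2 V3 E3 : finType)
    (vs1 : {set V1}) (es1 : {set E1}) (I1 : V1 -> E1 -> bool)
    (vs2 : {set V2}) (es2 : {set E2}) (I2 : V2 -> E2 -> bool)
    (vs3 : {set V3}) (es3 : {set E3}) (I3 : V3 -> E3 -> bool) :
  mgraph_iso vs1 es1 I1 vs2 es2 I2 -> mgraph_iso vs2 es2 I2 vs3 es3 I3 ->
  mgraph_iso vs1 es1 I1 vs3 es3 I3.
Proof.
case=> f1 [g1 [fi1 fim1 gi1 gim1 inc1]]; case=> f2 [g2 [fi2 fim2 gi2 gim2 inc2]].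
have fin u : u \in vs1 -> f1 u \in vs2 by move=> uA; rewrite -fim1 imset_f.
have gin e : e \in es1 -> g1 e \in es2 by move=> uA; rewrite -gim1 imset_f.
exists (f2 \o f1), (g2 \o g1); split.
- by move=> u w uA wA /= /fi2 e; apply: fi1 => //; apply: e; apply: fin.
- by rewrite imset_comp fim1 fim2.
- by move=> u w uA wA /= /gi2 e; apply: gi1 => //; apply: e; apply: gin.
- by rewrite imset_comp gim1 gim2.
- by move=> u uA e eA /=; rewrite inc2 ?inc1 // ?fin ?gin.
Qed.

Lemma val_mult_iso (V1 E1 V2 E2 : finType)
    (vs1 : {set V1}) (es1 : {set E1}) (I1 : V1 -> E1 -> bool)
    (vs2 : {set V2}) (es2 : {set E2}) (I2 : V2 -> E2 -> bool) k m :
  mgraph_iso vs1 es1 I1 vs2 es2 I2 -> val_mult vs1 es1 I1 k m -> val_mult vs2 es2 I2 k m.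
Proof.
case=> f [g [fi fim gi gim inc]] [H1 H2 H3].
have fin u : u \in vs1 -> f u \in vs2 by move=> uA; rewrite -fim imset_f.
have gin e : e \in es1 -> g e \in es2 by move=> uA; rewrite -gim imset_f.
have adjE u w : u \in vs1 -> w \in vs1 -> madj es2 I2 (f u) (f w) = madj es1 I1 u w.
  move=> uA wA; rewrite /madj.
  have -> : (f u != f w) = (u != w).
    apply/idP/idP; apply: contra; first by move=> /eqP ->.
    by move=> /eqP /fi ->.
  congr (_ && _).
  apply/existsP/existsP => [[e /andP [eB /andP [i1 i2]]] | [e /andP [eA /andP [i1 i2]]]].
    move: eB; rewrite -gim => /imsetP [e1 e1A ee]; subst e.
    by exists e1; rewrite e1A -!inc // i1 i2.
  by exists (g e); rewrite gin // !inc // i1 i2.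
split.
- move=> e eB; have := eB; rewrite -{1}gim => /imsetP [e1 e1A eE]; subst e.
  rewrite -(H1 _ e1A) -(card_in_imset (f := f)); last by move=> u w; rewrite !inE => /andP[? _] /andP[? _]; exact: fi.
  apply: eq_card => y; apply/idP/imsetP => [| [u]].
    rewrite inE -fim => /andP [/imsetP [u uA ->]]; rewrite inc // => iu.
    by exists u; rewrite // inE uA.
  by rewrite inE => /andP [uA iu] ->; rewrite inE fin // inc.
- move=> y yB; have := yB; rewrite -{1}fim => /imsetP [u uA yE]; subst y.
  rewrite -(H2 _ uA) -(card_in_imset (f := f)); last by move=> w w'; rewrite !inE => /andP[? _] /andP[? _]; exact: fi.
  apply: eq_card => y'; apply/idP/imsetP => [| [w]].
    rewrite inE -fim => /andP [/imsetP [w wA ->]]; rewrite adjE // => iu.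
    by exists w; rewrite // inE wA.
  by rewrite inE => /andP [wA iu] ->; rewrite inE fin // adjE.
- move=> y y' yB y'B; move: yB y'B; rewrite -fim => /imsetP [u uA ->] /imsetP [w wA ->].
  rewrite adjE // => ad; rewrite -(H3 _ _ uA wA ad) -(card_in_imset (f := g)); last by move=> e e'; rewrite !inE => /andP[? _] /andP[? _]; exact: gi.
  apply: eq_card => e; apply/idP/imsetP => [| [e1]].
    rewrite inE -gim => /andP [/imsetP [e1 e1A ->]]; rewrite !inc // => iu.
    by exists e1; rewrite // inE e1A.
  by rewrite inE => /andP [eA iu] ->; rewrite inE gin // !inc.
Qed.
Lemma mulJH_in (gT : finGroupType) (H J : {group gT}) j g h :
  j \in J -> h \in H -> g \in J * H -> j * g * h \in J * H.
Proof.
move=> jJ hH /mulsgP [j' h' j'J h'H ->].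
have -> : j * (j' * h') * h = (j * j') * (h' * h) by rewrite !mulgA.
by rewrite mem_mulg ?groupM.
Qed.

Lemma mulJH_eq (gT : finGroupType) (H J : {group gT}) j g h :
  j \in J -> h \in H -> (j * g * h \in J * H) = (g \in J * H).
Proof.
move=> jJ hH; apply/idP/idP => [|]; last exact: mulJH_in.
move=> P; have := mulJH_in (j := j^-1) (h := h^-1) (groupVr jJ) (groupVr hH) P.
by rewrite !mulgA mulVg mul1g -mulgA mulgV mulg1.
Qed.

Lemma cos_incE (gT : finGroupType) (H J : {group gT}) u w :
  cos_inc H J (H :* u) (J :* w) = (w * u^-1 \in J * H).
Proof.
rewrite /cos_inc.
have r1 := mem_repr_rcoset H u; have r2 := mem_repr_rcoset J w.
rewrite mem_rcoset in r1; rewrite mem_rcoset in r2.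
set R1 := repr (H :* u) in r1 *; set R2 := repr (J :* w) in r2 *.
have -> : R2 * R1^-1 = (R2 * w^-1) * (w * u^-1) * (R1 * u^-1)^-1.
  by rewrite invMg invgK !mulgA !mulgKV.
by rewrite mulJH_eq // groupV.
Qed.

Lemma rcoset_repr_sub (gT : finGroupType) (L M : {group gT}) k :
  L \subset M -> M :* repr (L :* k) = M :* k.
Proof.
move=> sLM; apply/rcoset_eqP; rewrite mem_rcoset.
have := mem_repr_rcoset L k; rewrite mem_rcoset; exact: (subsetP sLM).
Qed.

Lemma cos_sub (gT : finGroupType) (G K H J : {group gT}) :
  K \subset G -> G \subset H * K -> G \subset J * K ->
  K :&: (J * H) \subset (K :&: J) * (K :&: H) ->
  cos_iso K (K :&: H) (K :&: J) G H J.
Proof.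
move=> sKG sGHK sGJK sInt.
exists (fun B => H :* repr B), (fun B => J :* repr B); split.
- move=> B1 B2 /rcosetsP [k1 k1K ->] /rcosetsP [k2 k2K ->].
  rewrite !(rcoset_repr_sub (L := (K :&: H)%G)) ?subsetIr // => /rcoset_eqP.
  rewrite mem_rcoset => P; apply/rcoset_eqP; rewrite mem_rcoset inE P.
  by rewrite groupM ?groupV.
- apply/setP => C; apply/imsetP/rcosetsP => [[B /rcosetsP [k kK ->] ->] | [g gG ->]].
    exists k; first exact: (subsetP sKG).
    by rewrite (rcoset_repr_sub (L := (K :&: H)%G)) ?subsetIr.
  have := subsetP sGHK _ gG => /mulsgP [h k hH kK ->].
  exists ((K :&: H) :* k); first by apply/rcosetsP; exists k.
  rewrite (rcoset_repr_sub (L := (K :&: H)%G)) ?subsetIr //.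
  by apply/rcoset_eqP; rewrite mem_rcoset mulgK.
- move=> B1 B2 /rcosetsP [k1 k1K ->] /rcosetsP [k2 k2K ->].
  rewrite !(rcoset_repr_sub (L := (K :&: J)%G)) ?subsetIr // => /rcoset_eqP.
  rewrite mem_rcoset => P; apply/rcoset_eqP; rewrite mem_rcoset inE P.
  by rewrite groupM ?groupV.
- apply/setP => C; apply/imsetP/rcosetsP => [[B /rcosetsP [k kK ->] ->] | [g gG ->]].
    exists k; first exact: (subsetP sKG).
    by rewrite (rcoset_repr_sub (L := (K :&: J)%G)) ?subsetIr.
  have := subsetP sGJK _ gG => /mulsgP [h k hH kK ->].
  exists ((K :&: J) :* k); first by apply/rcosetsP; exists k.
  rewrite (rcoset_repr_sub (L := (K :&: J)%G)) ?subsetIr //.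
  by apply/rcoset_eqP; rewrite mem_rcoset mulgK.
- move=> B1 /rcosetsP [k1 k1K ->] B2 /rcosetsP [k2 k2K ->].
  rewrite (rcoset_repr_sub (L := (K :&: H)%G)) ?subsetIr //.
  rewrite (rcoset_repr_sub (L := (K :&: J)%G)) ?subsetIr //.
  rewrite cos_incE (cos_incE (K :&: H)%G (K :&: J)%G).
  apply/idP/idP => P.
    by apply: (subsetP sInt); rewrite inE P groupM ?groupV.
  by apply: (subsetP (mulgSS (subsetIr K J) (subsetIr K H))).
Qed.
Lemma ti1 (gT : finGroupType) (G H : {set gT}) g :
  G :&: H = 1 -> g \in G -> g \in H -> g = 1.
Proof. by move=> ti gG gH; apply/set1gP; rewrite -ti inE gG gH. Qed.

Lemma order2 (gT : finGroupType) (g : gT) : g ^+ 2 = 1 -> g != 1 -> #[g] = 2%N.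
Proof.
move=> g2 g1; have : (#[g] %| 2)%N by rewrite order_dvdn g2.
have : (1 < #[g])%N by rewrite order_gt1.
by case: (#[g]) => [|[|[|k]]] //= _; rewrite dvdn_addr ?dvdnn // gtnNdvd.
Qed.

Lemma prod_flip (gT : finGroupType) (I : eqType) (r : seq I) (j : I) (g : gT) (F F' : I -> gT) :
  (forall i, commute g (F i)) -> (forall i, i != j -> F' i = F i) -> F' j = g * F j ->
  \prod_(i <- r) F' i = g ^+ count (pred1 j) r * \prod_(i <- r) F i.
Proof.
move=> cg eF eFj; elim: r => [|i r IH]; first by rewrite !big_nil mulg1.
rewrite !big_cons IH /=; case: (eqVneq i j) => [-> | ne].
  rewrite eFj /= add1n expgS -!mulgA; congr (_ * _); rewrite !mulgA.
  by congr (_ * _); exact: (commuteX _ (commute_sym (cg j))).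
have -> : (false + count_mem j r)%N = count_mem j r by [].
rewrite eF // !mulgA; congr (_ * _).
exact: (commuteX _ (commute_sym (cg i))).
Qed.
Lemma gen_closedL (gT : finGroupType) (B S : {set gT}) :
  1 \in S -> (forall b g, b \in B -> g \in S -> b * g \in S) -> <<B>> \subset S.
Proof.
move=> S1 HB.
pose T := [set t | [forall g in S, t * g \in S]].
have gT' : group_set T.
  apply/group_setP; split; first by rewrite inE; apply/forall_inP => g Sg; rewrite mul1g.
  move=> t1 t2; rewrite !inE => /forall_inP H1 /forall_inP H2; apply/forall_inP => g Sg.
  by rewrite -mulgA H1 // H2.
have sBT : <<B>> \subset Group gT'.
  rewrite gen_subG; apply/subsetP => b Bb; rewrite inE; apply/forall_inP => g Sg; exact: HB.
apply/subsetP => t /(subsetP sBT); rewrite inE => /forall_inP /(_ 1 S1).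
by rewrite mulg1.
Qed.

Lemma gen_closedR (gT : finGroupType) (B S : {set gT}) :
  1 \in S -> (forall b g, b \in B -> g \in S -> g * b \in S) -> <<B>> \subset S.
Proof.
move=> S1 HB.
pose T := [set t | [forall g in S, g * t \in S]].
have gT' : group_set T.
  apply/group_setP; split; first by rewrite inE; apply/forall_inP => g Sg; rewrite mulg1.
  move=> t1 t2; rewrite !inE => /forall_inP H1 /forall_inP H2; apply/forall_inP => g Sg.
  by rewrite mulgA H2 // H1.
have sBT : <<B>> \subset Group gT'.
  rewrite gen_subG; apply/subsetP => b Bb; rewrite inE; apply/forall_inP => g Sg; exact: HB.
apply/subsetP => t /(subsetP sBT); rewrite inE => /forall_inP /(_ 1 S1).
by rewrite mul1g.
Qed.
Section Cube.
Variables (n lam : nat).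
Hypothesis lam1 : (0 < lam)%N.

Definition cflip (j : 'I_n) (u : cube_vert n) : cube_vert n :=
  [ffun i => if i == j then ~~ u i else u i].
Definition eidx (u w : cube_vert n) : nat := odflt 0%N (omap val [pick i : 'I_n | u i != w i]).

Lemma cflipK i u : cflip i (cflip i u) = u.
Proof. by apply/ffunP => j; rewrite !ffunE; case: eqP => //= _; rewrite negbK. Qed.

Lemma cflip_neq i u : cflip i u != u.
Proof. by apply/eqP => /ffunP /(_ i); rewrite ffunE eqxx; case: (u i). Qed.

Lemma cflip_inj u i j : cflip i u = cflip j u -> i = j.
Proof.
move/ffunP/(_ i); rewrite !ffunE eqxx; case: (i =P j) => // _.
by case: (u i).
Qed.

Lemma adj_flip u i : cube_adj u (cflip i u).
Proof.
rewrite /cube_adj; apply/cards1P; exists i; apply/setP => j; rewrite !inE ffunE.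
by case: (j =P i) => [-> | ne]; [case: (u i) | rewrite eqxx].
Qed.

Lemma adjP u w : cube_adj u w -> exists i, w = cflip i u /\ eidx u w = i.
Proof.
rewrite /cube_adj => /cards1P [i0 Hs].
have mem j : (u j != w j) = (j == i0).
  have : (j \in [set i | u i != w i]) = (j \in [set i0]) by rewrite Hs.
  by rewrite !inE.
exists i0; split.
  apply/ffunP => j; rewrite ffunE; case: (j =P i0) => [-> | /eqP ne].
    by have := mem i0; rewrite eqxx; case: (u i0); case: (w i0).
  by have := mem j; rewrite (negbTE ne) => /negbFE /eqP.
rewrite /eidx; case: pickP => [j /= hj | /(_ i0) /=].
  by move: hj; rewrite mem => /eqP ->.
by rewrite mem eqxx.
Qed.

Lemma eidx_flip u i : eidx u (cflip i u) = i.
Proof.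
have [j [e1 e2]] := adjP (adj_flip u i).
by rewrite e2 (cflip_inj e1).
Qed.

Lemma edge_form e : e \in cube_edges n lam -> exists u i, e.1 = [set u; cflip i u].
Proof.
case: e => s k; rewrite /cube_edges in_setX => /andP [sE _]; move: sE.
rewrite inE => /existsP [u /existsP [w /andP [adj /eqP ->]]].
by have [i [-> _]] := adjP adj; exists u, i.
Qed.

Lemma set2_eq (T : finType) (u w p q : T) :
  u != w -> u \in [set p; q] -> w \in [set p; q] -> [set p; q] = [set u; w].
Proof.
move=> ne; rewrite !inE; case/orP=> /eqP eu; case/orP=> /eqP ew; subst; rewrite ?eqxx in ne => //.
by rewrite setUC.
Qed.

Lemma madj_cube u w :
  madj (cube_edges n lam) (@cube_inc n lam) u w = [exists i, w == cflip i u].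
Proof.
apply/idP/existsP => [/andP [ne /exists_inP [e eE /andP [ue we]]] | [i /eqP ->]].
  have [u' [i e1]] := edge_form eE.
  rewrite /cube_inc e1 !inE in ue we.
  case/orP: ue => /eqP eu; case/orP: we => /eqP ew; subst.
  - by rewrite eqxx in ne.
  - by exists i.
  - by exists i; rewrite cflipK.
  - by rewrite eqxx in ne.
rewrite /madj eq_sym cflip_neq /=; apply/exists_inP.
exists ([set u; cflip i u], Ordinal lam1); last by rewrite /cube_inc !inE !eqxx orbT.
rewrite /cube_edges in_setX in_setT andbT inE.
by apply/existsP; exists u; apply/existsP; exists (cflip i u); rewrite adj_flip eqxx.
Qed.

Lemma cube_vm : val_mult [set: cube_vert n] (cube_edges n lam) (@cube_inc n lam) n lam.
Proof.
split.
- move=> e eE; have [u [i e1]] := edge_form eE.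
  rewrite (_ : [set u0 in [set: cube_vert n] | cube_inc u0 e] = e.1).
    by rewrite e1 cards2 eq_sym cflip_neq.
  by apply/setP => t; rewrite !inE.
- move=> u _; rewrite (_ : [set w in [set: cube_vert n] | madj (cube_edges n lam) (@cube_inc n lam) u w] = [set cflip i u | i : 'I_n]).
    by rewrite card_imset ?card_ord // => i j; apply: cflip_inj.
  apply/setP => w; rewrite !inE madj_cube; apply/existsP/imsetP => [[i /eqP ->] | [i _ ->]].
    by exists i.
  by exists i.
- move=> u w _ _; rewrite madj_cube => /existsP [i /eqP ew].
  rewrite (_ : [set e in cube_edges n lam | cube_inc u e && cube_inc w e] = [set ([set u; w], k) | k : 'I_lam]).
    by rewrite card_imset ?card_ord // => k k' [].
  have ne : u != w by rewrite ew eq_sym cflip_neq.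
  apply/setP => e; rewrite inE; apply/andP/imsetP => [[eE /andP [ue we]] | [k _ ->]].
    have [u' [j e1]] := edge_form eE.
    exists e.2 => //; case: e eE ue we e1 => s k /= _; rewrite /cube_inc /= => ue we e1.
    by rewrite e1 (set2_eq ne) // -e1.
  split; last by rewrite /cube_inc /= !inE !eqxx orbT.
  rewrite /cube_edges in_setX in_setT andbT inE.
  by apply/existsP; exists u; apply/existsP; exists w; rewrite ew adj_flip eqxx.
Qed.

End Cube.
Section Conc.
Variables (gT : finGroupType) (n lam : nat) (v : nat -> gT) (a x : gT) (D A : {group gT}).
Local Notation N := (<<[set v (val i) | i : 'I_n]>>).
Local Notation z := (v 0%N).
Hypotheses (n3 : (3 <= n)%N) (lam1 : (1 <= lam)%N) (abN : 2.-abelem N)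
  (cardN : #|N| = (2 ^ n)%N) (oa : #[a] = (n * lam)%N) (ox : #[x] = 2%N)
  (ax : a ^ x = a^-1) (sdD : <[a]> ><| <[x]> = D) (sdA : N ><| D = A)
  (va : forall i, (i < n)%N -> v i ^ a = v ((i + 1) %% n))
  (vx : forall i, (i < n)%N -> v i ^ x = v ((n - i) %% n)).

Lemma npos : (0 < n)%N. Proof. by apply: leq_trans n3. Qed.

Lemma eAD : N * D = A. Proof. by case/sdprodP: sdA. Qed.
Lemma nDN : D \subset 'N(N). Proof. by case/sdprodP: sdA. Qed.
Lemma tiND g : g \in N -> g \in D -> g = 1.
Proof. by case/sdprodP: sdA => _ _ _ ti; apply: ti1. Qed.
Lemma eD : <[a]> * <[x]> = D. Proof. by case/sdprodP: sdD. Qed.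
Lemma tiax g : g \in <[a]> -> g \in <[x]> -> g = 1.
Proof. by case/sdprodP: sdD => _ _ _ ti; apply: ti1. Qed.

Lemma sNA : N \subset A. Proof. by rewrite -eAD mulG_subl. Qed.
Lemma sDA : D \subset A. Proof. by rewrite -eAD mulG_subr. Qed.
Lemma sAD : <[a]> \subset D. Proof. by rewrite -eD mulG_subl. Qed.
Lemma sXD : <[x]> \subset D. Proof. by rewrite -eD mulG_subr. Qed.
Lemma aD : a \in D. Proof. exact: (subsetP sAD _ (cycle_id a)). Qed.
Lemma xD : x \in D. Proof. exact: (subsetP sXD _ (cycle_id x)). Qed.
Lemma akD k : a ^+ k \in D. Proof. exact: groupX aD. Qed.

Lemma vN i : (i < n)%N -> v i \in N.
Proof. by move=> lt; apply: mem_gen; apply/imsetP; exists (Ordinal lt). Qed.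
Lemma vmN m : v (m %% n) \in N.
Proof. by apply: vN; rewrite ltn_pmod // npos. Qed.
Lemma zN : z \in N.
Proof. by apply: vN; rewrite npos. Qed.

Lemma N2 g : g \in N -> g ^+ 2 = 1.
Proof. by case/(abelemP (isT : prime 2)): abN => _; apply. Qed.
Lemma NV g : g \in N -> g^-1 = g.
Proof. by move=> gN; apply: (mulgI g); rewrite mulgV -expg2 N2. Qed.
Lemma Ncomm g h : g \in N -> h \in N -> commute g h.
Proof.
move=> gN hN; have := abelem_abelian abN => /centsP cN.
exact: (cN _ gN _ hN).
Qed.
Lemma NJ g d : g \in N -> d \in D -> g ^ d \in N.
Proof. by move=> gN dD; rewrite memJ_norm // (subsetP nDN). Qed.

Lemma va_mod m : v (m %% n) ^ a = v (m.+1 %% n).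
Proof. by rewrite va ?ltn_pmod ?npos // modnDml addn1. Qed.

Lemma zconj m : z ^ (a ^+ m) = v (m %% n).
Proof.
elim: m => [|m IH]; first by rewrite expg0 conjg1 mod0n.
by rewrite expgSr conjgM IH va_mod.
Qed.

Lemma xV : x^-1 = x. Proof. exact: invg2id. Qed.
Lemma x1 : x != 1. Proof. by rewrite -order_gt1 ox. Qed.
Lemma x2 : x ^+ 2 = 1. Proof. by rewrite -ox expg_order. Qed.
Lemma xnA : x \notin <[a]>.
Proof. by apply/negP => xa; move/eqP: x1; apply; apply: tiax => //; apply: cycle_id. Qed.
Lemma akx k : (a ^+ k) ^ x = a ^- k.
Proof. by rewrite conjXg ax expVgn. Qed.
Lemma zx : z ^ x = z.
Proof. by rewrite vx ?npos // subn0 modnn. Qed.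

Lemma Dcase d : d \in D -> d \in <[a]> \/ exists2 c, c \in <[a]> & d = c * x.
Proof.
rewrite -eD => /mulsgP [c e cA]; rewrite (cycle2g ox) !inE => /orP [] /eqP -> ->.
  by left; rewrite mulg1.
by right; exists c.
Qed.

Lemma vconjA m k : v (m %% n) ^ (a ^+ k) = v ((m + k) %% n).
Proof. by rewrite -(zconj m) -(zconj (m + k)) -conjgM expgD. Qed.

Lemma vconjD d m : d \in D -> exists m', v (m %% n) ^ d = v (m' %% n).
Proof.
case/Dcase => [/cycleP [k ->] | [c /cycleP [k ->] ->]].
  by exists (m + k)%N; rewrite vconjA.
exists (n - (m + k) %% n)%N; rewrite conjgM vconjA.
by rewrite vx ?ltn_pmod ?npos.
Qed.

Lemma zconjD d : d \in D -> exists m', z ^ d = v (m' %% n).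
Proof. by move=> dD; have := vconjD 0 dD; rewrite mod0n. Qed.

Definition P (u : cube_vert n) : gT := \prod_(i < n) (if u i then v i else 1).
Definition zero : cube_vert n := [ffun=> false].

Lemma PN u : P u \in N.
Proof. by apply: group_prod => i _; case: (u i); rewrite ?group1 ?vN. Qed.

Lemma Pflip u j : P (cflip j u) = v j * P u.
Proof.
rewrite /P (@prod_flip _ _ _ j (v j) (fun i => if u i then v i else 1)).
- by rewrite count_uniq_mem ?index_enum_uniq // mem_index_enum expg1.
- by move=> i; apply: Ncomm; rewrite ?vN //; case: (u i); rewrite ?group1 ?vN.
- by move=> i ne; rewrite ffunE (negbTE ne).
rewrite ffunE eqxx; case: (u j) => /=; last by rewrite mulg1.
by rewrite -expg2 N2 // vN.
Qed.

Lemma Pzero : P zero = 1.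
Proof. by rewrite /P big1 // => i _; rewrite ffunE. Qed.

Lemma Psurj g : g \in N -> exists u, P u = g.
Proof.
have : N \subset [set P u | u : cube_vert n].
  apply: gen_closedL; first by apply/imsetP; exists zero; rewrite ?Pzero.
  move=> b g' /imsetP [i _ ->] /imsetP [u _ ->].
  by apply/imsetP; exists (cflip i u); rewrite ?Pflip.
by move=> sub gN; case/imsetP: (subsetP sub _ gN) => u _ ->; exists u.
Qed.

Lemma Pinj : injective P.
Proof.
have im : P @: [set: cube_vert n] = N.
  apply/setP => g; apply/imsetP/idP => [[u _ ->] | gN]; first exact: PN.
  by case: (Psurj gN) => u <-; exists u.
have := eqxx #|P @: [set: cube_vert n]|; rewrite {2}im cardN.
have cT : #|[set: cube_vert n]| = (2 ^ n)%N by rewrite cardsT card_ffun card_bool card_ord.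
rewrite -cT.
move/imset_injP => inj u w; apply: inj; exact: in_setT.
Qed.

Definition Pinv g := odflt zero [pick u | P u == g].
Lemma PinvK u : Pinv (P u) = u.
Proof. by rewrite /Pinv; case: pickP => [w /eqP /Pinj // | /(_ u)]; rewrite eqxx. Qed.
Definition par g := odd (\sum_(i < n) Pinv g i).

Lemma par_flip g (j : 'I_n) : g \in N -> par (v j * g) = ~~ par g.
Proof.
case/Psurj => u <-; rewrite -Pflip /par !PinvK (bigD1 j) //= [in RHS](bigD1 j) //=.
rewrite ffunE eqxx oddD [in RHS]oddD.
rewrite (eq_bigr (fun i => u i : nat)); last by move=> i ne; rewrite ffunE (negbTE ne).
by case: (u j) => /=; rewrite ?negbK.
Qed.

Lemma par1 : par 1 = false.
Proof. by rewrite -Pzero /par PinvK big1 // => i _; rewrite ffunE. Qed.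

Lemma parz : par z = true.
Proof.
have := par_flip (Ordinal npos) (group1 N); rewrite mulg1 par1 /=.
by [].
Qed.

Lemma z1 : z != 1.
Proof. by apply/eqP => e; have := parz; rewrite e par1. Qed.

Lemma z2 : z ^+ 2 = 1.
Proof. exact: N2 zN. Qed.
Lemma oz : #[z] = 2%N.
Proof. exact: order2 z2 z1. Qed.

Lemma commJ (g h : gT) : g ^ h = g -> commute g h.
Proof. by move=> e; rewrite /commute conjgC e. Qed.

Lemma cxz : commute x z. Proof. exact/commute_sym/commJ/zx. Qed.
Lemma xx : x ^ x = x. Proof. by rewrite conjgE mulKg. Qed.

Local Notation X := (<<[set a; z]>>).
Local Notation Y := (<<[set a; z * x]>>).
Local Notation J := (<<[set x; z]>>).
Local Notation H := (<<[set x; a * x]>>).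

Lemma aX : a \in X. Proof. by apply: mem_gen; rewrite !inE eqxx. Qed.
Lemma zX : z \in X. Proof. by apply: mem_gen; rewrite !inE eqxx orbT. Qed.
Lemma aY : a \in Y. Proof. by apply: mem_gen; rewrite !inE eqxx. Qed.
Lemma zxY : z * x \in Y. Proof. by apply: mem_gen; rewrite !inE eqxx orbT. Qed.
Lemma xJ : x \in J. Proof. by apply: mem_gen; rewrite !inE eqxx. Qed.
Lemma zJ : z \in J. Proof. by apply: mem_gen; rewrite !inE eqxx orbT. Qed.
Lemma aA : a \in A. Proof. exact: (subsetP sDA _ aD). Qed.
Lemma xA : x \in A. Proof. exact: (subsetP sDA _ xD). Qed.
Lemma zA : z \in A. Proof. exact: (subsetP sNA _ zN). Qed.

Lemma XaN : X \subset <[a]> * N.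
Proof.
apply: gen_closedL; first by rewrite -[1]mulg1 mem_mulg.
move=> b g; rewrite !inE => /orP [] /eqP -> /mulsgP [c p cA pN ->].
  by rewrite mulgA mem_mulg // groupM // cycle_id.
rewrite mulgA (conjgC z c) -mulgA mem_mulg // groupM // NJ ?zN //.
exact: (subsetP sAD).
Qed.

Lemma NX : N \subset X.
Proof.
rewrite gen_subG; apply/subsetP => g /imsetP [i _ ->].
by change (v (nat_of_ord i) \in X); rewrite -(modn_small (ltn_ord i)) -zconj groupJ ?groupX ?zX ?aX.
Qed.

Lemma XA : X \subset A.
Proof. by rewrite gen_subG; apply/subsetP => g; rewrite !inE => /orP [] /eqP ->; rewrite ?aA ?zA. Qed.

Lemma HD : H = D.
Proof.
apply/eqP; rewrite eqEsubset; apply/andP; split.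
  by rewrite gen_subG; apply/subsetP => g; rewrite !inE => /orP [] /eqP ->; rewrite ?groupM ?xD ?aD.
have xH : x \in H by apply: mem_gen; rewrite !inE eqxx.
have aH : a \in H.
  have : a * x \in H by apply: mem_gen; rewrite !inE eqxx orbT.
  by rewrite groupMr.
by rewrite -eD mul_subG // cycle_subG.
Qed.

Lemma XD : X :&: D = <[a]>.
Proof.
apply/eqP; rewrite eqEsubset; apply/andP; split; last by rewrite subsetI sAD cycle_subG aX.
apply/subsetP => g; rewrite inE => /andP [gX gD].
case/mulsgP: (subsetP XaN _ gX) => c p cA pN e.
have : p \in D by have := gD; rewrite e groupMl // (subsetP sAD).
by move/(tiND pN) => p1; rewrite e p1 mulg1.
Qed.

Lemma JzX : J \subset <[z]> * <[x]>.
Proof.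
apply: gen_closedL; first by rewrite -[1]mulg1 mem_mulg.
move=> b g; rewrite !inE => /orP [] /eqP -> /mulsgP [c e cz ex ->].
  rewrite mulgA; case/cycleP: cz => k ->.
  by rewrite (commuteX k cxz) -mulgA mem_mulg ?groupM ?mem_cycle ?cycle_id.
by rewrite mulgA mem_mulg ?groupM ?cycle_id.
Qed.

Lemma cxzx : commute x (z * x).
Proof. by apply: commuteM => //; apply: cxz. Qed.

Lemma JzxX : J \subset <[z * x]> * <[x]>.
Proof.
apply: gen_closedL; first by rewrite -[1]mulg1 mem_mulg.
move=> b g; rewrite !inE => /orP [] /eqP -> /mulsgP [c e cz ex ->].
  rewrite mulgA; case/cycleP: cz => k ->.
  by rewrite (commuteX k cxzx) -mulgA mem_mulg ?groupM ?mem_cycle ?cycle_id.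
have -> : z * (c * e) = (z * x) * c * (x^-1 * e).
  case/cycleP: cz => k ->.
  have e1 : x * (z * x) ^+ k = (z * x) ^+ k * x := commuteX k cxzx.
  by rewrite !mulgA -[z * x * _]mulgA e1 mulgA mulgK.
by rewrite mem_mulg //; [apply: groupM => //; apply: cycle_id | rewrite groupM ?groupV ?cycle_id].
Qed.

Lemma capJH (K H' J' C : {group gT}) :
  J' \subset C * H' -> C \subset K :&: J' ->
  K :&: (J' * H') \subset (K :&: J') * (K :&: H').
Proof.
move=> sJ sC; apply/subsetP => g; rewrite inE => /andP [gK /mulsgP [j h jJ hH eg]].
case/mulsgP: (subsetP sJ _ jJ) => c h' cC h'H ej.
have cKJ := subsetP sC _ cC; move: (cKJ); rewrite inE => /andP [cK cJ].
rewrite eg ej -mulgA mem_mulg // inE (groupM h'H hH) andbT.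
by move: gK; rewrite eg ej -mulgA groupMl.
Qed.

Lemma XJ : X :&: J = <[z]>.
Proof.
apply/eqP; rewrite eqEsubset; apply/andP; split; last by rewrite subsetI !cycle_subG zX zJ.
apply/subsetP => j; rewrite inE => /andP [jX jJ].
case/mulsgP: (subsetP JzX _ jJ) => c e cz ex ej.
have cX : c \in X by move: cz; apply/subsetP; rewrite cycle_subG zX.
have eX : e \in X by move: jX; rewrite ej groupMl.
have : e \in X :&: D by rewrite inE eX (subsetP sXD).
by rewrite XD => /tiax /(_ ex) e1; rewrite ej e1 mulg1.
Qed.

Lemma ADX : A \subset D * X.
Proof.
apply/subsetP => g; rewrite -eAD => /mulsgP [p d pN dD ->].
by rewrite conjgC mem_mulg // (subsetP NX) // NJ.
Qed.

Lemma AJX : A \subset J * X.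
Proof.
apply/subsetP => g; rewrite -eAD => /mulsgP [p d pN dD ->].
have aX' : <[a]> \subset X by rewrite cycle_subG aX.
case: (Dcase dD) => [dA | [c cA ->]].
  rewrite -[p * d]mul1g mem_mulg // groupM //; [exact: (subsetP NX) | exact: (subsetP aX')].
rewrite mulgA conjgC mem_mulg ?xJ // conjMg groupM //.
  by rewrite (subsetP NX) // NJ ?xD.
case/cycleP: cA => k ->; rewrite akx groupV groupX //; exact: aX.
Qed.

Lemma X_JH : X :&: (J * H) \subset (X :&: J) * (X :&: H).
Proof.
apply: (capJH (C := <[z]>%G)); last by rewrite XJ.
apply: subset_trans JzX _; apply: mulgS; apply: subset_trans sXD _; rewrite -HD; exact: subxx.
Qed.

Definition SY := [set g | [exists p in N, exists d in D, (g == p * d) && (par p == (d \notin <[a]>))]].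

Lemma dx_a d : d \in D -> (d * x \in <[a]>) = (d \notin <[a]>).
Proof.
move=> dD; case: (boolP (d \in <[a]>)) => dA.
  by rewrite groupMl //; exact/negbTE/xnA.
case: (Dcase dD) => [dA' | [c cA ec]]; first by rewrite dA' in dA.
by rewrite ec -mulgA -expg2 x2 mulg1.
Qed.

Lemma YSY : Y \subset SY.
Proof.
apply: gen_closedR.
  rewrite inE; apply/exists_inP; exists 1; rewrite ?group1 //.
  by apply/exists_inP; exists 1; rewrite ?group1 // mulg1 eqxx par1.
move=> b g; rewrite !inE => /orP [] /eqP -> /exists_inP [p pN /exists_inP [d dD /andP [/eqP -> /eqP pp]]].
  apply/exists_inP; exists p => //; apply/exists_inP; exists (d * a); first by rewrite groupM ?aD.
  by rewrite mulgA eqxx groupMr ?cycle_id // pp; apply/eqP.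
have dVD : d^-1 \in D by rewrite groupV.
case: (zconjD dVD) => m em.
have ez : d * z = v (m %% n) * d by rewrite conjgCV em.
have vn : v (m %% n) \in N by exact: vmN.
apply/exists_inP; exists (v (m %% n) * p); first by rewrite groupM.
apply/exists_inP; exists (d * x); first by rewrite groupM ?xD.
have -> : p * d * (z * x) = v (m %% n) * p * (d * x).
  by rewrite !mulgA -[p * d * z]mulgA ez !mulgA (Ncomm pN vn).
rewrite eqxx /=.
have := par_flip (Ordinal (ltn_pmod m npos)) pN => /= ->.
by rewrite dx_a // pp.
Qed.

Lemma YD : Y :&: D = <[a]>.
Proof.
apply/eqP; rewrite eqEsubset; apply/andP; split; last by rewrite subsetI sAD cycle_subG aY.
apply/subsetP => g; rewrite inE => /andP [gY gD].
have := subsetP YSY _ gY; rewrite inE => /exists_inP [p pN /exists_inP [d dD /andP [/eqP eg /eqP pp]]].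
have pD : p \in D by rewrite -(mulgK d p) -eg groupM ?groupV.
have p1 := tiND pN pD.
move: pp; rewrite p1 par1 => /esym /negbFE dA.
by rewrite eg p1 mul1g.
Qed.

Lemma xnY : x \notin Y.
Proof.
apply/negP => xY; have : x \in Y :&: D by rewrite inE xY xD.
by rewrite YD; apply/negP; exact: xnA.
Qed.

Lemma YJ : Y :&: J = <[z * x]>.
Proof.
apply/eqP; rewrite eqEsubset; apply/andP; split; last by rewrite subsetI !cycle_subG zxY groupM ?zJ ?xJ.
apply/subsetP => j; rewrite inE => /andP [jY jJ].
case/mulsgP: (subsetP JzxX _ jJ) => c e cz ex ej.
have cY : c \in Y by move: cz; apply/subsetP; rewrite cycle_subG zxY.
have eY : e \in Y by move: jY; rewrite ej groupMl.
have : e \in Y :&: D by rewrite inE eY (subsetP sXD).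
by rewrite YD => /tiax /(_ ex) e1; rewrite ej e1 mulg1.
Qed.

Lemma YxY w : w \in Y -> w ^ x \in Y.
Proof.
have : Y \subset [set w | w ^ x \in Y].
  apply: gen_closedR; first by rewrite inE conj1g group1.
  move=> b g; rewrite !inE => /orP [] /eqP -> gY; rewrite conjMg groupM //.
    by rewrite ax groupV aY.
  by rewrite conjMg zx xx zxY.
by move=> sub wY; have := subsetP sub _ wY; rewrite inE.
Qed.

Lemma YA : Y \subset A.
Proof. by rewrite gen_subG; apply/subsetP => g; rewrite !inE => /orP [] /eqP ->; rewrite ?aA ?groupM ?zA ?xA. Qed.

Lemma AG : A = <<[set x; a * x; z]>>.
Proof.
apply/eqP; change (A :==: <<[set x; a * x; z]>>); rewrite eqEsubset; apply/andP; split.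
  have xG : x \in <<[set x; a * x; z]>> by apply: mem_gen; rewrite !inE eqxx.
  have axG : a * x \in <<[set x; a * x; z]>> by apply: mem_gen; rewrite !inE eqxx orbT.
  have zG : z \in <<[set x; a * x; z]>> by apply: mem_gen; rewrite !inE eqxx !orbT.
  have aG : a \in <<[set x; a * x; z]>> by move: axG; rewrite groupMr.
  rewrite -eAD mul_subG //; last by rewrite -eD mul_subG // cycle_subG.
  rewrite gen_subG; apply/subsetP => g /imsetP [i _ ->].
  by change (v (nat_of_ord i) \in <<[set x; a * x; z]>>); rewrite -(modn_small (ltn_ord i)) -zconj groupJ ?groupX.
by rewrite gen_subG; apply/subsetP => g; rewrite !inE => /orP [/orP [] | ] /eqP ->; rewrite ?xA ?zA ?groupM ?aA ?xA.
Qed.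

Lemma AKY (K : {group gT}) : x \in K -> A \subset K * Y.
Proof.
move=> xK.
have key k w : k \in K -> w \in Y -> k * w * x \in K * Y.
  by move=> kK wY; rewrite -mulgA (conjgC w x) mulgA; apply: mem_mulg; [exact: groupM | exact: YxY].
rewrite AG; apply: gen_closedR; first by rewrite -[1]mulg1 mem_mulg.
move=> b g; rewrite !inE => /orP [/orP [] | ] /eqP -> /mulsgP [k w kK wY ->].
- exact: key.
- by rewrite mulgA -[k * w * a]mulgA key ?groupM ?aY.
rewrite (_ : k * w * z = k * (w * (z * x)) * x); last by rewrite -!mulgA -expg2 x2 mulg1.
by apply: key => //; rewrite groupM // zxY.
Qed.

Lemma Y_JH : Y :&: (J * H) \subset (Y :&: J) * (Y :&: H).
Proof.
apply: (capJH (C := <[z * x]>%G)); last by rewrite YJ.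
apply: subset_trans JzxX _; apply: mulgS; apply: subset_trans sXD _; rewrite -HD; exact: subxx.
Qed.

Lemma cosX : cos_iso X <[a]> <[z]> A H J.
Proof.
rewrite -{1}XJ -{1}XD -{1}HD.
apply: cos_sub; [exact: XA | have := ADX; rewrite -HD; exact | exact: AJX | exact: X_JH].
Qed.

Lemma cosY : cos_iso Y <[a]> <[z * x]> A H J.
Proof.
rewrite -{1}YJ -{1}YD -{1}HD.
apply: cos_sub; [exact: YA | apply: AKY; apply: mem_gen; rewrite !inE eqxx // | apply: AKY; exact: xJ | exact: Y_JH].
Qed.

Definition fV (u : cube_vert n) := <[a]> :* P u.
Definition epick (s : {set cube_vert n}) :=
  [pick uw : cube_vert n * cube_vert n | cube_adj uw.1 uw.2 && (s == [set uw.1; uw.2])].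
Definition fE (e : {set cube_vert n} * 'I_lam) : {set gT} :=
  if epick e.1 is Some uw then <[z]> :* (a ^+ (eidx uw.1 uw.2 + n * e.2) * P uw.1) else set0.

Lemma mod_small_i (i : 'I_n) k : ((i + n * k) %% n = i)%N.
Proof. by rewrite addnC mulnC modnMDl modn_small. Qed.
Lemma div_small_i (i : 'I_n) k : ((i + n * k) %/ n = k)%N.
Proof. by rewrite addnC mulnC divnMDl ?npos // divn_small // addn0. Qed.

Lemma coset_z g (i : 'I_n) k :
  <[z]> :* (a ^+ (i + n * k) * v i * g) = <[z]> :* (a ^+ (i + n * k) * g).
Proof.
have e : a ^+ (i + n * k) * v i = z * a ^+ (i + n * k).
  by have h := zconj (i + n * k); rewrite mod_small_i in h; rewrite -h (conjgC z).
rewrite e -mulgA; apply/rcoset_eqP; rewrite mem_rcoset mulgK cycle_id //.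
Qed.

Lemma fE_any e t : e \in cube_edges n lam -> t \in e.1 ->
  exists i : 'I_n, e.1 = [set t; cflip i t] /\ fE e = <[z]> :* (a ^+ (i + n * e.2) * P t).
Proof.
move=> eE te; have [u [j ej]] := edge_form eE.
rewrite /fE /epick; case: pickP => [[u' w'] /= /andP [adj /eqP e1] | /(_ (u, cflip j u)) /=]; last first.
  by rewrite adj_flip ej eqxx.
have [i [ew ei]] := adjP adj; rewrite ei; subst w'.
move: te; rewrite e1 !inE => /orP [/eqP -> | /eqP ->]; first by exists i.
exists i; split; first by rewrite cflipK setUC.
by rewrite Pflip mulgA coset_z.
Qed.

Lemma zsubN : <[z]> \subset N. Proof. by rewrite cycle_subG zN. Qed.

Lemma inc_key q m : q \in N ->
  (a ^+ m * q \in <[z]> * <[a]>) = (q == 1) || (q == v (m %% n)).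
Proof.
move=> qN; apply/idP/idP.
  case/mulsgP => c b cz ba e.
  pose r := q ^ (a ^+ m)^-1.
  have rN : r \in N by apply: NJ; rewrite // groupV akD.
  have er : a ^+ m * q = r * a ^+ m by rewrite conjgCV.
  have e2 : c^-1 * r = b * (a ^+ m)^-1.
    have : r = c * b * (a ^+ m)^-1 by rewrite -e er mulgK.
    by move=> ->; rewrite -!mulgA mulKg.
  have cN : c \in N by apply: (subsetP zsubN).
  have h1 : c^-1 * r = 1.
    apply: tiND; first by rewrite groupM ?groupV.
    by rewrite e2 groupM ?groupV ?akD // (subsetP sAD).
  have rc : r = c by rewrite -(mulVKg c r) h1 mulg1.
  move: cz; rewrite (cycle2g oz) !inE => /orP [] /eqP c1.
    by rewrite -(conjg_eq1 q ((a ^+ m)^-1)) -/r rc c1 eqxx.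
  apply/orP; right; apply/eqP.
  by rewrite -zconj -c1 -rc /r conjgKV.
case/orP => /eqP ->.
  by rewrite mulg1 -[a ^+ m]mul1g mem_mulg ?group1 ?mem_cycle.
by rewrite -zconj -(conjgC z) mem_mulg ?cycle_id ?mem_cycle.
Qed.

Lemma cube_incE e t : e \in cube_edges n lam ->
  cos_inc <[a]> <[z]> (fV t) (fE e) = (t \in e.1).
Proof.
move=> eE; have [u [j ej]] := edge_form eE.
have ue : u \in e.1 by rewrite ej !inE eqxx.
have [i [e1 ->]] := fE_any eE ue.
rewrite /fV cos_incE -mulgA inc_key ?groupM ?groupV ?PN // mod_small_i e1 !inE.
congr (_ || _); first by rewrite -eq_mulgV1 eq_sym (inj_eq Pinj).
apply/eqP/eqP => [h | ->].
  apply: Pinj; rewrite Pflip -h (Ncomm (PN u) (groupVr (PN t))) -mulgA -expg2 N2 ?PN //.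
  by rewrite mulg1 NV ?PN.
by rewrite Pflip invMg mulgA mulgV mul1g NV ?vN.
Qed.

Lemma cubeX : mgraph_iso [set: cube_vert n] (cube_edges n lam) (@cube_inc n lam)
  (rcosets <[a]> X) (rcosets <[z]> X) (@cos_inc gT <[a]> <[z]>).
Proof.
exists fV, fE; split.
- move=> u w _ _ /rcoset_eqP; rewrite mem_rcoset => h.
  apply: Pinj; apply/eqP; rewrite eq_mulgV1; apply/eqP; apply: tiND.
    by rewrite groupM ?groupV ?PN.
  exact: (subsetP sAD).
- apply/setP => B; apply/imsetP/rcosetsP => [[u _ ->] | [g gX ->]].
    by exists (P u) => //; exact: (subsetP NX _ (PN u)).
  case/mulsgP: (subsetP XaN _ gX) => c p cA pN eg.
  have [u eu] := Psurj pN; exists u => //.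
  rewrite /fV eu eg; apply/rcoset_eqP; rewrite mem_rcoset mulgK //.
- move=> e1 e2 E1 E2 eq.
  have s12 : e1.1 = e2.1 by apply/setP => t; rewrite -!cube_incE // eq.
  have [u [j ej]] := edge_form E1.
  have ue1 : u \in e1.1 by rewrite ej !inE eqxx.
  have ue2 : u \in e2.1 by rewrite -s12.
  have [i1 [_ f1]] := fE_any E1 ue1; have [i2 [_ f2]] := fE_any E2 ue2.
  move: eq; rewrite f1 f2 => /rcoset_eqP; rewrite mem_rcoset invMg mulgA mulgK => h.
  have h1 : a ^+ (i1 + n * e1.2) * (a ^+ (i2 + n * e2.2))^-1 = 1.
    apply: tiND; first by apply: (subsetP zsubN).
    by rewrite groupM ?groupV ?akD.
  have : a ^+ (i1 + n * e1.2) == a ^+ (i2 + n * e2.2) by rewrite eq_mulgV1 h1.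
  have b1 : (i1 + n * e1.2 < #[a])%N by rewrite oa; have := ltn_ord i1; have := ltn_ord e1.2; nia.
  have b2 : (i2 + n * e2.2 < #[a])%N by rewrite oa; have := ltn_ord i2; have := ltn_ord e2.2; nia.
  rewrite eq_expg_mod_order !modn_small // => /eqP em.
  have k12 : (e1.2 : nat) = e2.2 by rewrite -(div_small_i i1 e1.2) em div_small_i.
  by case: e1 e2 s12 k12 {E1 E2 f1 f2 ue1 ue2 ej h h1 b1 b2 em} => [s1 k1] [s2 k2] /= -> /val_inj ->.
- apply/setP => B; apply/imsetP/rcosetsP => [[e eE ->] | [g gX ->]].
    have [u [j ej]] := edge_form eE.
    have ue : u \in e.1 by rewrite ej !inE eqxx.
    have [i [_ ->]] := fE_any eE ue.
    exists (a ^+ (i + n * e.2) * P u) => //.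
    by rewrite groupM ?groupX ?aX // (subsetP NX _ (PN u)).
  case/mulsgP: (subsetP XaN _ gX) => c p /cycleP [m0 ->] pN ->.
  have [u <-] := Psurj pN.
  pose m := (m0 %% (n * lam))%N.
  have nl : (0 < n * lam)%N by rewrite muln_gt0 npos.
  have mlt : (m < n * lam)%N by rewrite ltn_pmod.
  have klt : (m %/ n < lam)%N by rewrite ltn_divLR ?npos // mulnC.
  pose i := Ordinal (ltn_pmod m npos); pose k := Ordinal klt.
  have eE : ([set u; cflip i u], k) \in cube_edges n lam.
    rewrite /cube_edges in_setX in_setT andbT inE.
    by apply/existsP; exists u; apply/existsP; exists (cflip i u); rewrite adj_flip eqxx.
  have uin : u \in ([set u; cflip i u], k).1 by rewrite !inE eqxx.
  exists ([set u; cflip i u], k) => //.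
  have [i' [e1 ->]] := fE_any eE uin.
  have ii : i' = i.
    have : cflip i u \in [set u; cflip i' u] by rewrite -e1 !inE eqxx orbT.
    rewrite !inE (negbTE (cflip_neq _ _)) /= => /eqP /cflip_inj //.
  rewrite ii /=.
  have -> : (i + n * k = m)%N by rewrite /= [in RHS](divn_eq m n) addnC mulnC.
  by rewrite /m -oa expg_mod_order.
- by move=> u _ e eE; apply: cube_incE.
Qed.

Lemma flagA : flag_regular A x (a * x) z.
Proof.
have xax : x * a * x = a^-1 by rewrite -ax conjgE xV mulgA.
have zD : z \notin D by apply/negP => zD; move/eqP: z1; apply; exact: tiND zN zD.
have axD : a * x \in D by rewrite groupM ?aD ?xD.
split.
- split => //; last exact: oz.
  apply: order2; first by rewrite expg2 -mulgA (mulgA x a x) xax mulgV.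
  apply/eqP => e; move: xnA; rewrite (_ : x = a^-1) ?groupV ?cycle_id //.
  by rewrite -(mulKg a x) e mulg1.
- split.
  + apply/eqP => e; have a1 : a = 1 by apply: (mulIg x); rewrite mul1g -e.
    by move: oa; rewrite a1 order1; have := n3; nia.
  + by apply/eqP => e; move: zD; rewrite -e axD.
  + by apply/eqP => e; move: zD; rewrite -e xD.
- by rewrite {1}AG.
- exact: cxz.
- by rewrite HD.
Qed.

End Conc.

Theorem lemma6p2 (gT : finGroupType) (n lam : nat) (v : nat -> gT)
    (a x : gT) (D A : {group gT}) :
  (3 <= n)%N -> (1 <= lam)%N ->
  (* N = <v_0,...,v_{n-1}> is elementary abelian with basis v_0..v_{n-1} *)
  2.-abelem (Nsub n v) -> #|Nsub n v| = (2 ^ n)%N ->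
  (* D = <a> x| <x>, |a| = n lam, |x| = 2, a^x = a^-1 *)
  #[a] = (n * lam)%N -> #[x] = 2%N -> a ^ x = a^-1 ->
  <[a]> ><| <[x]> = D ->
  (* A = N x| D with v_i^a = v_{i+1}, v_i^x = v_{n-i} *)
  Nsub n v ><| D = A ->
  (forall i, (i < n)%N -> v i ^ a = v ((i + 1) %% n)) ->
  (forall i, (i < n)%N -> v i ^ x = v ((n - i) %% n)) ->
  let z := v 0%N in
  let y := a * x in
  let H := <<[set x; y]>> in
  let J := <<[set x; z]>> in
  let X := <<[set a; z]>> in
  let Y := <<[set a; z * x]>> in
  [/\ flag_regular A x y z,
      cube_cos_iso n lam A H J,
      cos_iso A H J X <[a]> <[z]>,
      cos_iso X <[a]> <[z]> Y <[a]> <[z * x]> &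
      val_mult (rcosets H A) (rcosets J A) (@cos_inc gT H J) n lam].
Proof.
move=> n3 lam1 abN cardN oa ox ax sdD sdA va vx z y H J X Y.
rewrite /z /y /H /J /X /Y.
rewrite /Nsub in abN cardN sdA.
have cX := cosX n3 ox ax sdD sdA va vx.
have cY := cosY n3 abN cardN ox ax sdD sdA va vx.
have cuX := cubeX n3 lam1 abN cardN oa ox sdD sdA va.
have cuA := mgraph_trans cuX cX.
split.
- exact: flagA n3 lam1 abN cardN oa ox ax sdD sdA va vx.
- exact: cuA.
- rewrite /cos_iso; apply: (mgraph_sym set0 set0); exact: cX.
- rewrite /cos_iso; apply: (mgraph_trans cX); apply: (mgraph_sym set0 set0); exact: cY.
- exact: val_mult_iso cuA (cube_vm n lam1).
Qed.
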